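(* Let $G$ be a finite solvable group with a fix-point-free automorphism $\alpha:G\to G$, and let $r(t)\in\mathbb{Z}[t]$ be an identity of $\alpha$. Then $G$ has a characteristic $\operatorname{Cong}(r(t))$-subgroup $S$ such that $G/S$ is a nilpotent $\operatorname{Cong}(r(t))'$-group.
   Context: Fix-point-free: fixes only the identity. For $s(t)=b_0+\cdots+b_et^e\in\mathbb{Z}[t]$, $x^{s(\alpha)}:=x^{b_0}\alpha(x^{b_1})\cdots\alpha^e(x^{b_e})$; $r(t)$ is an identity of $\alpha$ if $r=r_1+\cdots+r_k$ in $\mathbb{Z}[t]$ with $x^{r_1(\alpha)}\cdots x^{r_k(\alpha)}=1_G$ for all $x\in G$. For $r=\sum a_it^i$, $r_{u,j}(t):=\sum_{i\equiv j\bmod u}a_it^i$; $\operatorname{Cong}(r)$ is the non-negative generator of $\mathbb{Z}\cap\bigcap_{1<u\le\deg r+1}(r_{u,0}\mathbb{Z}[t]+\cdots+r_{u,u-1}\mathbb{Z}[t])$. For $n\in\mathbb{Z}$, an $n$-group is a group in which every element's order divides some natural power of $n$; an $n'$-group is a group $H$ with no $n$-torsion, i.e. only $h=1_H$ satisfies $h^n=1_H$. *)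

(* Defs.v *)
From mathcomp Require Import all_boot all_order all_algebra all_fingroup all_solvable.
Set Implicit Arguments. Unset Strict Implicit. Unset Printing Implicit Defensive.
Import GRing.Theory.
Local Open Scope ring_scope.

Definition gexpz (gT : finGroupType) (x : gT) (z : int) : gT :=
  match z with
  | Posz n => (x ^+ n)%g
  | Negz n => (x ^- n.+1)%g
  end.

(* x^{s(alpha)} := x^{b_0} alpha(x^{b_1}) ... alpha^e(x^{b_e})  for s = sum b_i t^i *)
Definition polyact (gT : finGroupType) (alpha : gT -> gT) (s : {poly int}) (x : gT) : gT :=
  (\prod_(i < size s) iter i alpha (gexpz x s`_i))%g.

Definition is_identity (gT : finGroupType) (G : {set gT}) (alpha : gT -> gT)
    (r : {poly int}) : Prop :=
  exists rs : seq {poly int},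
    \sum_(s <- rs) s = r /\
    forall x, x \in G -> (\prod_(s <- rs) polyact alpha s x)%g = 1%g.

Definition rpart (r : {poly int}) (u j : nat) : {poly int} :=
  \poly_(i < size r) (if (i %% u == j)%N then r`_i else 0).

Definition in_part_ideal (r : {poly int}) (u : nat) (c : int) : Prop :=
  exists q : 'I_u -> {poly int}, c%:P = \sum_(j < u) q j * rpart r u j.

(* n = Cong(r): the non-negative generator of
   Z ∩ ⋂_{1 < u <= deg r + 1} (r_{u,0} Z[t] + ... + r_{u,u-1} Z[t]).
   deg r + 1 = size r; for deg r <= 0 we use u = 2. *)
Definition is_Cong (r : {poly int}) (n : nat) : Prop :=
  forall c : int,
    (forall u : nat, (1 < u <= maxn 2 (size r))%N -> in_part_ideal r u c) <->
    (n%:Z %| c)%Z.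

Definition is_ngroup (gT : finGroupType) (H : {set gT}) (n : nat) : Prop :=
  forall h, h \in H -> exists k : nat, (#[h]%g %| n ^ k)%N.

Definition is_nprimegroup (gT : finGroupType) (H : {set gT}) (n : nat) : Prop :=
  forall h, h \in H -> (h ^+ n)%g = 1%g -> h = 1%g.

(* Main.v *)
From HB Require Import structures.
Require Import Defs.
From mathcomp Require Import all_boot all_order all_algebra all_fingroup all_solvable all_field all_character zify.

Module MPA.
Set Implicit Arguments. Unset Strict Implicit. Unset Printing Implicit Defensive.
Import GRing.Theory.
Local Open Scope ring_scope.

Section EvPoly.
Variables (K : fieldType) (d : nat) (A : 'M[K]_d.+1).

Definition evp (P : {poly int}) : 'M[K]_d.+1 := horner_mx A (map_poly intr P).

Lemma evp_wide (P : {poly int}) m : (size P <= m)%N ->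
  evp P = \sum_(i < m) (P`_i)%:~R *: A ^+ i.
Proof.
move=> hm; rewrite /evp.
rewrite -[P in map_poly _ P](coefK P) poly_def.
rewrite (big_ord_widen m (fun i => P`_i *: 'X^i)) // big_mkcond /=.
rewrite rmorph_sum /= rmorph_sum /=; apply: eq_bigr => i _.
case: ifP => [_|/negbT]; last first.
  rewrite -leqNgt => hi; rewrite nth_default // .
  by rewrite map_poly0 rmorph0 mulr0z scale0r.
by rewrite map_polyZ map_polyXn /= linearZ /= rmorphXn /= horner_mx_X.
Qed.

Lemma evpC (c : int) : evp c%:P = (c%:~R)%:M.
Proof. by rewrite /evp map_polyC /= horner_mx_C. Qed.

Lemma evp_comm P Q : evp P *m evp Q = evp Q *m evp P.
Proof. by rewrite !mulmxE; apply: comm_horner_mx2. Qed.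

End EvPoly.

Lemma rpart_ideal_char (K : fieldType) d (A : 'M[K]_d.+1) (r : {poly int}) (n : nat)
   (w : 'rV[K]_d.+1) u :
  is_Cong r n -> w != 0 -> (1 < u <= maxn 2 (size r))%N ->
  (forall j, (j < u)%N -> w *m evp A (rpart r u j) = 0) ->
  (n%:R : K) = 0.
Proof.
move=> hC wn0 hu hw.
have := (proj2 (hC n%:Z)) (dvdzz _) u hu.
case=> q hq.
have : w *m evp A (n%:Z)%:P = 0.
  rewrite hq /evp rmorph_sum /= rmorph_sum /= mulmx_sumr big1 // => j _.
  rewrite !rmorphM /= -mulmxE mulmxA.
  have := comm_horner_mx2 A (map_poly intr (q j)) (map_poly intr (rpart r u j)).
  rewrite /GRing.comm -!mulmxE => hc; rewrite -mulmxA hc mulmxA.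
  by rewrite [w *m _]hw ?mul0mx.
rewrite evpC mul_mx_scalar => /eqP; rewrite scaler_eq0 (negPf wn0) orbF.
by rewrite -pmulrn => /eqP.
Qed.

End MPA.
Import MPA.
Module MPB1.
Set Implicit Arguments. Unset Strict Implicit. Unset Printing Implicit Defensive.
Import GRing.Theory.
Local Open Scope ring_scope.

Section Eig.
Variables (K : closedFieldType) (d : nat).
Implicit Types (M : 'M[K]_d.+1) (v : 'rV[K]_d.+1).

Lemma eig_prod M (rs : seq K) v : v != 0 ->
  v *m horner_mx M (\prod_(z <- rs) ('X - z%:P)) = 0 ->
  exists P : {poly K}, v *m horner_mx M P != 0 /\
    exists l, v *m horner_mx M P *m M = l *: (v *m horner_mx M P).
Proof.
elim: rs v => [|z rs IH] v vn0.
  by rewrite big_nil rmorph1 mulmx1 => v0; rewrite v0 eqxx in vn0.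
rewrite big_cons rmorphM /= -mulmxE mulmxA.
have [vz0 _ | vzn0 /(IH _ vzn0)] := eqVneq (v *m horner_mx M ('X - z%:P)) 0.
  exists 1; rewrite rmorph1 mulmx1; split=> //; exists z.
  move: vz0; rewrite rmorphB /= horner_mx_X horner_mx_C mulmxBr => /eqP.
  by rewrite subr_eq0 mul_mx_scalar => /eqP.
case=> P [hP1 [l hP2]]; exists (('X - z%:P) * P).
by rewrite rmorphM /= -mulmxE mulmxA; split=> //; exists l.
Qed.

Lemma eig_step M N v : (0 < N)%N -> M ^+ N = 1 -> v != 0 ->
  exists P : {poly K}, v *m horner_mx M P != 0 /\
    exists l, v *m horner_mx M P *m M = l *: (v *m horner_mx M P).
Proof.
move=> N0 MN vn0; have [rs hrs] := closed_field_poly_normal ('X^N - (1 : K)%:P).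
rewrite lead_coefXnsubC // scale1r in hrs.
apply: (eig_prod (rs := rs)) => //.
by rewrite -hrs rmorphB /= rmorphXn /= horner_mx_X horner_mx_C MN subrr mulmx0.
Qed.

End Eig.

End MPB1.
Import MPB1.
Module MPB2.
Set Implicit Arguments. Unset Strict Implicit. Unset Printing Implicit Defensive.
Import GRing.Theory.
Local Open Scope ring_scope.

Local Open Scope nat_scope.
Lemma dvd_shift m j k : (j < m)%N -> (m %| (m - j + k))%N = (k %% m == j)%N.
Proof.
move=> h; rewrite /dvdn -modnDmr.
have : (k %% m < m)%N by rewrite ltn_mod; lia.
move: (k %% m) => a ha.
case: (ltngtP a j) => haj.
- rewrite modn_small; last by lia.
  apply/eqP; lia.
- have -> : (m - j + a = (a - j) + m)%N by lia.
  rewrite modnDr modn_small; last by lia.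
  apply/eqP; lia.
- by rewrite haj subnK ?modnn ?eqxx //; lia.
Qed.
Local Open Scope ring_scope.

Lemma evp_rpart (K : fieldType) d (A : 'M[K]_d.+1) (r : {poly int}) u j :
  evp A (rpart r u j) =
  \sum_(i < size r) (if (i %% u == j)%N then r`_i else 0)%:~R *: A ^+ i.
Proof.
rewrite (evp_wide _ (size_poly _ _)); apply: eq_bigr => i _.
by rewrite coef_poly ltn_ord.
Qed.

Section Core.
Variables (K : closedFieldType) (gT : finGroupType) (E : {group gT}) (alpha : gT -> gT).
Variables (d : nat) (A : 'M[K]_d.+1) (rho : gT -> 'M[K]_d.+1).
Hypotheses (aE : {in E, forall x, alpha x \in E})
  (aM : {in E &, {morph alpha : x y / (x * y)%g}})
  (ainj : {in E &, injective alpha})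
  (afpf : {in E, forall x, alpha x = x -> x = 1%g})
  (aper : exists2 o, (0 < o)%N & {in E, forall x, iter o alpha x = x}).
Hypotheses (rM : {in E &, forall x y, rho (x * y)%g = rho x *m rho y})
  (r1 : rho 1%g = 1%:M)
  (rC : {in E &, forall x y, rho x *m rho y = rho y *m rho x})
  (rA : {in E, forall x, rho x *m A = A *m rho (alpha x)})
  (hN : (#|E|%:R : K) != 0)
  (Aunit : A \in unitmx).

Lemma rhoX x k : x \in E -> rho (x ^+ k)%g = rho x ^+ k.
Proof.
move=> Ex; elim: k => [|k IH]; first by rewrite expg0 r1 expr0.
by rewrite expgS rM ?groupX // IH exprS mulmxE.
Qed.

Lemma rho_order x : x \in E -> rho x ^+ #|E| = 1.
Proof. by move=> Ex; rewrite -rhoX // expg_cardG // r1. Qed.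

Lemma iterE t x : x \in E -> iter t alpha x \in E.
Proof. by move=> Ex; elim: t => //= t IH; apply: aE. Qed.

Lemma iterM t : {in E &, {morph iter t alpha : x y / (x * y)%g}}.
Proof.
move=> x y Ex Ey; elim: t => //= t IH.
by rewrite IH aM // iterE.
Qed.

Lemma iterI t : {in E &, injective (iter t alpha)}.
Proof.
move=> x y Ex Ey; elim: t => //= t IH h.
by apply: IH; apply: ainj => //; apply: iterE.
Qed.

Lemma iter_onto t : iter t alpha @: E = E.
Proof.
apply/eqP; rewrite eqEcard card_in_imset ?leqnn ?andbT; last exact: iterI.
by apply/subsetP => _ /imsetP[x Ex ->]; apply: iterE.
Qed.

Lemma reindex_iter (V : nmodType) t (F : gT -> V) :
  \sum_(e in E) F e = \sum_(e in E) F (iter t alpha e).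
Proof.
rewrite -{1}(iter_onto t) big_imset //; exact: iterI.
Qed.

Lemma rhoA_iter t x : x \in E -> rho x *m A ^+ t = A ^+ t *m rho (iter t alpha x).
Proof.
move=> Ex; elim: t => [|t IH]; first by rewrite !expr0 mulmx1 mul1mx.
by rewrite exprSr -mulmxE mulmxA IH -mulmxA rA ?iterE // mulmxA.
Qed.

Lemma sum_char0 (phi : gT -> K) e0 : e0 \in E ->
  {in E &, {morph phi : x y / (x * y)%g >-> x * y}} -> phi e0 != 1 ->
  \sum_(e in E) phi e = 0.
Proof.
move=> Ee0 phiM phin1.
have onto : (mulg e0) @: E = E.
  apply/eqP; rewrite eqEcard card_in_imset ?leqnn ?andbT; last by move=> x y _ _; apply: mulgI.
  by apply/subsetP => _ /imsetP[x Ex ->]; rewrite groupM.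
have : \sum_(e in E) phi e = phi e0 * \sum_(e in E) phi e.
  rewrite -{1}onto big_imset /=; last by move=> x y _ _; apply: mulgI.
  by rewrite mulr_sumr; apply: eq_bigr => x Ex; rewrite phiM.
move/eqP; rewrite -{1}[\sum_(e in E) _]mul1r -subr_eq0 -mulrBl mulf_eq0.
by rewrite subr_eq0 eq_sym (negPf phin1) => /eqP.
Qed.


Lemma common_eig (S : seq gT) (w0 : 'rV[K]_d.+1) : w0 != 0 -> {subset S <= E} ->
  exists C : 'M[K]_d.+1, (forall e, e \in E -> C *m rho e = rho e *m C) /\
    w0 *m C != 0 /\ forall e, e \in S -> exists l, w0 *m C *m rho e = l *: (w0 *m C).
Proof.
move=> w0n0; elim: S => [|e S IH] sSE.
  by exists 1%:M; rewrite mulmx1; split=> // e Ee; rewrite mulmx1 mul1mx.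
have Ee : e \in E by apply: sSE; rewrite mem_head.
have [C [hC1 [hC2 hC3]]] : exists C : 'M[K]_d.+1, (forall e, e \in E -> C *m rho e = rho e *m C) /\
    w0 *m C != 0 /\ forall e, e \in S -> exists l, w0 *m C *m rho e = l *: (w0 *m C).
  by apply: IH => x xS; apply: sSE; rewrite inE xS orbT.
have [P [hP1 hP2]] := eig_step (cardG_gt0 E) (rho_order Ee) hC2.
have comm x : x \in E -> horner_mx (rho e) P *m rho x = rho x *m horner_mx (rho e) P.
  by move=> Ex; symmetry; apply: (comm_mx_horner P (rC Ex Ee)).
exists (C *m horner_mx (rho e) P); split; last split.
- by move=> x Ex; rewrite -mulmxA comm // !mulmxA hC1.
- by rewrite mulmxA.
move=> x; rewrite inE => /orP[/eqP -> | xS]; first by rewrite mulmxA.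
have [l hl] := hC3 _ xS; exists l.
rewrite -!mulmxA comm; last by apply: sSE; rewrite inE xS orbT.
by rewrite !mulmxA hl -scalemxAl.
Qed.

Lemma core_main (r : {poly int}) (z : gT) : evp A r = 0 -> z \in E -> rho z != 1%:M ->
  exists w : 'rV[K]_d.+1, w != 0 /\ exists u, (1 < u <= maxn 2 (size r))%N /\
     forall j, (j < u)%N -> w *m evp A (rpart r u j) = 0.
Proof.
move=> hr Ez hz.
have [i hi] : exists i, row i (rho z - 1%:M) != 0.
  case: (pickP (fun i => row i (rho z - 1%:M) != 0)) => [i hi|h0]; first by exists i.
  exfalso; move/negP: hz; apply; rewrite -subr_eq0; apply/eqP/row_matrixP => i.
  by rewrite row0; move/negbFE/eqP: (h0 i).
pose x0 : 'rV[K]_d.+1 := delta_mx 0 i.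
pose w0 := x0 *m (rho z - 1%:M).
have w0n0 : w0 != 0 by rewrite /w0 /x0 -rowE.
have sE : {subset enum E <= E} by move=> x; rewrite mem_enum.
have [C [hC1 [hC2 hC3]]] := common_eig w0n0 sE.
pose w := w0 *m C.
have eig e : e \in E -> exists l, w *m rho e = l *: w.
  by move=> Ee; apply: hC3; rewrite mem_enum.
have [j hj] : exists j, w 0 j != 0.
  case: (pickP (fun j => w 0 j != 0)) => [j hj|h0]; first by exists j.
  exfalso; move/negP: hC2; apply; apply/eqP/rowP => j.
  by rewrite [RHS]mxE; move/negbFE/eqP: (h0 j).
pose chi e := (w *m rho e) 0 j / w 0 j.
have sc a : (a *: w) 0 j = a * w 0 j by rewrite mxE.
have hchi e : e \in E -> w *m rho e = chi e *: w.
  by move=> Ee; have [l hl] := eig e Ee; rewrite /chi hl mxE mulfK.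
have chiM : {in E &, {morph chi : x y / (x * y)%g >-> x * y}}.
  move=> x y Ex Ey.
  have : w *m rho (x * y)%g = (chi x * chi y) *: w.
    by rewrite rM // mulmxA hchi // -scalemxAl hchi // scalerA mulrC.
  rewrite hchi ?groupM // => /rowP /(_ j); rewrite !sc; exact: (mulIf hj).
have chi1 : chi 1%g = 1.
  have : w *m rho 1%g = 1 *: w by rewrite r1 mulmx1 scale1r.
  rewrite hchi // => /rowP /(_ j); rewrite !sc; exact: (mulIf hj).
have chiX e k : e \in E -> chi (e ^+ k)%g = chi e ^+ k.
  move=> Ee; elim: k => [|k IH]; first by rewrite expg0 chi1 expr0.
  by rewrite expgS chiM ?groupX // IH exprS.
have chin0 e : e \in E -> chi e != 0.
  move=> Ee; apply/eqP => c0; move: (chiX e #|E| Ee).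
  by rewrite expg_cardG // chi1 c0 expr0n eqn0Ngt cardG_gt0 /= => /eqP; rewrite oner_eq0.
have chiz : chi z != 1.
  apply/eqP => cz1.
  have wz : w *m rho z = w by rewrite hchi // cz1 scale1r.
  have wzk k : w *m rho z ^+ k = w.
    elim: k => [|k IH]; first by rewrite expr0 mulmx1.
    by rewrite exprSr -mulmxE mulmxA IH wz.
  pose y := x0 *m C.
  have wy : w = y *m (rho z - 1%:M).
    rewrite /w /w0 /y -!mulmxA; congr (_ *m _).
    by rewrite mulmxBl mulmxBr hC1 // mulmx1 mul1mx.
  have : y *m (rho z ^+ #|E| - 1) = (#|E|%:R : K) *: w.
    rewrite subrX1 -mulmxE mulmxA -[rho z - 1]/(rho z - 1%:M) -wy mulmx_sumr.
    under eq_bigr do rewrite wzk.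
    by rewrite sumr_const card_ord scaler_nat.
  rewrite rho_order // subrr mulmx0 => /esym /eqP.
  by rewrite scaler_eq0 (negPf hN) (negPf hC2).
pose Per t := [forall e in E, chi (iter t alpha e) == chi e].
have PerP t : reflect {in E, forall e, chi (iter t alpha e) = chi e} (Per t).
  by apply: (iffP forall_inP) => h e Ee; apply/eqP; apply: h.
have Per_add a b : Per a -> Per b -> Per (a + b)%N.
  move=> /PerP ha /PerP hb; apply/PerP => e Ee.
  by rewrite iterD ha ?iterE // hb.
have Per_sub a b : Per a -> Per (a + b)%N -> Per b.
  move=> /PerP ha /PerP hab; apply/PerP => e Ee.
  by rewrite -ha ?iterE // -iterD hab.
have [o o0 ho] := aper.
have exPer : exists t, (0 < t)%N && Per t.
  by exists o; rewrite o0 /=; apply/PerP => e Ee; rewrite ho.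
pose m := ex_minn exPer.
have [m0 Perm minm] : [/\ (0 < m)%N, Per m & forall t, (0 < t)%N -> Per t -> (m <= t)%N].
  rewrite /m; case: ex_minnP => m' /andP[h1 h2] h3; split=> // t t0 Pt.
  by apply: h3; rewrite t0.
have Per_mul k : Per (k * m)%N.
  elim: k => [|k IH]; first by apply/PerP.
  by rewrite mulSn; apply: Per_add.
have Per_dvd t : Per t = (m %| t)%N.
  apply/idP/idP => [Pt|/dvdnP[k ->] //].
  have Pmod : Per (t %% m)%N.
    by apply: (Per_sub (t %/ m * m)%N); rewrite // -divn_eq.
  rewrite /dvdn; apply/negP => /negP; rewrite -lt0n => hm.
  by have := minm _ hm Pmod; rewrite leqNgt ltn_pmod.
have m1 : (1 < m)%N.
  rewrite ltn_neqAle eq_sym m0 andbT; apply/eqP => hm1.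
  move: Perm; rewrite hm1 => /PerP /= P1.
  pose f x := (x^-1 * alpha x)%g.
  have a1 : alpha 1%g = 1%g.
    by apply: (mulgI (alpha 1%g)); rewrite -aM // !mulg1.
  have aV x : x \in E -> alpha x^-1%g = (alpha x)^-1%g.
    move=> Ex; apply: (mulgI (alpha x)); rewrite -aM ?groupV // !mulgV //.
  have finj : {in E &, injective f}.
    move=> x y Ex Ey; rewrite /f => h.
    have : alpha (y * x^-1)%g = (y * x^-1)%g.
      have h2 : alpha y = (y * x^-1 * alpha x)%g by rewrite -mulgA h mulKVg.
      by rewrite aM ?groupV // aV // h2 mulgK.
    move=> hh; have := afpf (groupM Ey (groupVr Ex)) hh.
    by move/eqP; rewrite -eq_mulgV1 => /eqP ->.
  have fonto : f @: E = E.
    apply/eqP; rewrite eqEcard card_in_imset // leqnn andbT.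
    by apply/subsetP => _ /imsetP[x Ex ->]; rewrite groupM ?groupV ?aE.
  move: Ez; rewrite -fonto => /imsetP[x Ex zx].
  move/eqP: chiz; apply; rewrite zx /f chiM ?groupV ?aE // P1 //.
  by rewrite -chiM ?groupV // mulVg chi1.
pose P0 := \sum_(e in E) (chi e)^-1 *: rho e.
have proj t : w *m A ^+ t *m P0 = (if Per t then (#|E|%:R : K) else 0) *: (w *m A ^+ t).
  rewrite /P0 mulmx_sumr (reindex_iter t).
  have term e : e \in E -> w *m A ^+ t *m ((chi (iter t alpha e))^-1 *: rho (iter t alpha e))
      = ((chi (iter t alpha e))^-1 * chi e) *: (w *m A ^+ t).
    move=> Ee; rewrite -scalemxAr -(mulmxA w) -rhoA_iter // mulmxA hchi //.
    by rewrite -scalemxAl scalerA.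
  rewrite (eq_bigr _ term) -scaler_suml; congr (_ *: _).
  case: (boolP (Per t)) => Pt.
    rewrite (eq_bigr (fun _ => 1)) ?sumr_const //.
    by move=> e Ee; move/PerP: Pt => ->//; rewrite mulVf ?chin0.
  move/forall_inPn: Pt => [e0 Ee0 ne0].
  apply: (sum_char0 Ee0).
    move=> x y Ex Ey /=; rewrite iterM // !chiM ?iterE // invfM mulrACA //.
  apply/eqP => h; move/eqP: ne0; apply.
  by rewrite -[RHS](mulVKf (chin0 _ (iterE t Ee0))) h mulr1.
clearbody P0.
have Au : A \is a GRing.unit := Aunit.
have main l : (l < m)%N -> w *m evp A (rpart r m l) = 0.
  move=> jm; pose s := (m - l)%N.
  have As : A ^+ s \in unitmx by apply: unitrX.
  suff : (#|E|%:R : K) *: (w *m evp A (rpart r m l) *m A ^+ s) = 0.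
    move/eqP; rewrite scaler_eq0 (negPf hN) /= => /eqP h.
    by rewrite -[LHS](mulmxK As) h mul0mx.
  have h0 : w *m A ^+ s *m (\sum_(k < size r) (r`_k)%:~R *: A ^+ k) *m P0 = 0.
    by rewrite -evp_wide // hr mulmx0 mul0mx.
  rewrite -h0 evp_rpart !mulmx_sumr !mulmx_suml scaler_sumr; apply: eq_bigr => k _.
  rewrite -!scalemxAr -!scalemxAl.
  rewrite -[w *m A ^+ s *m A ^+ k]mulmxA -[w *m A ^+ k *m A ^+ s]mulmxA mulmxE -!exprD.
  rewrite [(s + k)%N]addnC proj Per_dvd addnC dvd_shift //.
  case: eqP => _; last by rewrite mulr0z !scale0r !scaler0.
  by rewrite !scalerA mulrC.
case: (leqP m (maxn 2 (size r))) => hm.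
  exists w; split=> //; exists m; split; [by rewrite m1 | exact: main].
exists w; split=> //; exists 2%N; split; first by rewrite leq_maxl.
have rk0 k : (k < size r)%N -> (r`_k)%:~R = 0 :> K.
  move=> hk; have km : (k < m)%N.
    by apply: leq_trans hm; apply: leq_trans (leq_maxr 2 _); apply: ltnW.
  have := main k km; rewrite evp_rpart (bigD1 (Ordinal hk)) //= big1; last first.
    move=> i0 /negbTE ineq; rewrite modn_small; last first.
      by apply: leq_trans hm; rewrite ltnS; apply: leq_trans (ltnW (ltn_ord i0)) (leq_maxr _ _).
    have -> : (i0 == k :> nat) = false by apply: negbTE; apply: contraFN ineq => /eqP hik; apply/eqP/val_inj.
    by rewrite mulr0z scale0r.
  rewrite modn_small // eqxx addr0 -scalemxAr => /eqP; rewrite scaler_eq0 => /orP[/eqP //|].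
  move=> /eqP hwk; exfalso; move/negP: hC2; apply; apply/eqP.
  have Ak : A ^+ k \in unitmx by apply: unitrX.
  by rewrite -/w -[w](mulmxK Ak) hwk mul0mx.
move=> l _; rewrite evp_rpart big1 ?mulmx0 // => i0 _.
by case: ifP => _; rewrite ?rk0 ?mulr0z ?scale0r.
Qed.



End Core.

End MPB2.
Import MPB2.
Module MPC.
Set Implicit Arguments. Unset Strict Implicit. Unset Printing Implicit Defensive.
Import GRing.Theory.
Local Open Scope ring_scope.

Section AlphaMx.
Variables (p : nat) (gT : finGroupType) (N : {group gT}).
Hypotheses (abelN : (p.-abelem N)%g) (ntN : N :!=: 1%g).
Variable alpha : gT -> gT.
Hypotheses (aN : {in N, forall x, alpha x \in N})
  (aMN : {in N &, {morph alpha : x y / (x * y)%g}}).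

Local Notation ErV := (abelem_rV abelN ntN).
Local Notation rV_E := (rVabelem abelN ntN).
Local Notation d := (abelem_dim' (gval N)).

Definition alpha_fun (v : 'rV['F_p]_d.+1) : 'rV['F_p]_d.+1 := ErV (alpha (rV_E v)).

Lemma alpha_exp x k : x \in N -> alpha (x ^+ k)%g = (alpha x ^+ k)%g.
Proof.
move=> Nx; elim: k => [|k IH].
  by rewrite !expg0; apply: (mulgI (alpha 1%g)); rewrite -aMN // !mulg1.
by rewrite !expgS aMN ?groupX // IH.
Qed.

Fact alpha_fun_linear : linear alpha_fun.
Proof.
move=> m u v; rewrite /alpha_fun rVabelemD rVabelemZ aMN ?groupX ?mem_rVabelem //.
by rewrite alpha_exp ?mem_rVabelem // abelem_rV_M ?groupX ?aN ?mem_rVabelem // abelem_rV_X ?aN ?mem_rVabelem // natr_Zp.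
Qed.

HB.instance Definition _ :=
  GRing.isSemilinear.Build 'F_p _ _ _ alpha_fun
    (GRing.semilinear_linear alpha_fun_linear).

Definition alpha_mx := lin1_mx alpha_fun.

Lemma alpha_mxE x : x \in N -> ErV x *m alpha_mx = ErV (alpha x).
Proof. by move=> Nx; rewrite mul_rV_lin1 /= /alpha_fun abelem_rV_K. Qed.

Lemma alpha_mxX x k : x \in N -> ErV x *m alpha_mx ^+ k = ErV (iter k alpha x).
Proof.
move=> Nx; elim: k => [|k IH]; first by rewrite expr0 mulmx1.
have iN j : iter j alpha x \in N by elim: j => //= j hj; apply: aN.
by rewrite exprSr -mulmxE mulmxA IH alpha_mxE.
Qed.

Lemma iter_inN k x : x \in N -> iter k alpha x \in N.
Proof. by move=> Nx; elim: k => //= k hk; apply: aN. Qed.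

Lemma alpha_inv x : x \in N -> alpha x^-1%g = (alpha x)^-1%g.
Proof.
move=> Nx; apply: (mulgI (alpha x)); rewrite -aMN ?groupV // !mulgV.
by apply: (mulgI (alpha 1%g)); rewrite -aMN // !mulg1.
Qed.

Lemma gexpz_in x c : x \in N -> gexpz x c \in N.
Proof. by move=> Nx; case: c => k /=; rewrite ?groupV groupX. Qed.

Lemma iter_gexpz k x c : x \in N -> iter k alpha (gexpz x c) = gexpz (iter k alpha x) c.
Proof.
move=> Nx; elim: k => //= k ->.
have Nk := iter_inN k Nx.
by case: c => j /=; rewrite ?alpha_inv ?groupX // alpha_exp.
Qed.

Lemma ErV_gexpz x c : x \in N -> ErV (gexpz x c) = c%:~R *: ErV x.
Proof.
move=> Nx; case: c => k /=; first by rewrite abelem_rV_X.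
by rewrite abelem_rV_V ?groupX // abelem_rV_X // NegzE mulrNz scaleNr.
Qed.

Lemma polyact_in s x : x \in N -> polyact alpha s x \in N.
Proof.
move=> Nx; rewrite /polyact; apply: group_prod => i _.
by rewrite iter_gexpz // gexpz_in // iter_inN.
Qed.

Lemma ErV_prod (I : Type) (l : seq I) (F : I -> gT) :
  (forall i, F i \in N) -> ErV (\prod_(i <- l) F i)%g = \sum_(i <- l) ErV (F i).
Proof.
move=> FN; elim: l => [|a l IH]; first by rewrite !big_nil abelem_rV_1.
rewrite !big_cons abelem_rV_M ?IH //; apply: group_prod => i _; exact: FN.
Qed.

Lemma ErV_polyact s x : x \in N ->
  ErV (polyact alpha s x) = \sum_(i < size s) (s`_i)%:~R *: ErV (iter i alpha x).
Proof.
move=> Nx; rewrite /polyact ErV_prod; last first.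
  by move=> i; rewrite iter_gexpz // gexpz_in // iter_inN.
by apply: eq_bigr => i _; rewrite iter_gexpz // ErV_gexpz // iter_inN.
Qed.

Lemma widen_sum (V : lmodType 'F_p) (s : {poly int}) M (X : nat -> V) :
  (size s <= M)%N ->
  \sum_(i < size s) (s`_i)%:~R *: X i = \sum_(i < M) (s`_i)%:~R *: X i.
Proof.
move=> hM; rewrite (big_ord_widen M (fun i => (s`_i)%:~R *: X i)) // big_mkcond /=.
apply: eq_bigr => i _; case: ifP => // /negbT; rewrite -leqNgt => h.
by rewrite nth_default // mulr0z scale0r.
Qed.

Lemma ident_mx (r : {poly int}) :
  (exists rs : seq {poly int}, \sum_(s <- rs) s = r /\
    forall x, x \in N -> (\prod_(s <- rs) polyact alpha s x)%g = 1%g) ->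
  evp alpha_mx r = 0.
Proof.
case=> rs [hrs hid].
pose M := \max_(s <- r :: rs) size s.
have sM s : s \in r :: rs -> (size s <= M)%N.
  by move=> hs; apply: (@leq_bigmax_seq _ (r :: rs) xpredT size s).
apply/row_matrixP => i; rewrite row0 rowE.
set v := delta_mx 0 i; have -> : v = ErV (rV_E v) by rewrite rVabelemK.
set y := rV_E v; have Ny : y \in N by apply: mem_rVabelem.
rewrite (evp_wide _ (sM r (mem_head _ _))) mulmx_sumr.
have h0 : ErV (\prod_(s <- rs) polyact alpha s y)%g = 0 by rewrite hid // abelem_rV_1.
rewrite ErV_prod in h0; last by move=> s; apply: polyact_in.
rewrite -[RHS]h0.
have -> : \sum_(s <- rs) ErV (polyact alpha s y) =
    \sum_(s <- rs) \sum_(i < M) (s`_i)%:~R *: ErV (iter i alpha y).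
  rewrite big_seq_cond [RHS]big_seq_cond; apply: eq_bigr => s /andP[hs _].
  by rewrite ErV_polyact // (@widen_sum _ s M (fun i => ErV (iter i alpha y))) // sM // inE hs orbT.
rewrite exchange_big /=; apply: eq_bigr => k _.
rewrite -scalemxAr alpha_mxX // -scaler_suml; congr (_ *: _).
by rewrite -hrs coef_sum rmorph_sum.
Qed.

End AlphaMx.

Lemma CL0 (gT : finGroupType) (G N E : {group gT}) (alpha : {perm gT})
    (r : {poly int}) (n p : nat) :
  alpha \in Aut G -> (forall x, x \in G -> alpha x = x -> x = 1%g) ->
  is_identity G alpha r -> is_Cong r n ->
  (N <| G)%g -> (p.-abelem N)%g -> N :!=: 1%g -> {in N, forall x, alpha x \in N} ->
  E \subset G -> {in E, forall x, alpha x \in E} -> coprime p #|E| ->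
  {in E &, forall x y, [~ x, y]%g \in 'C(N)%g} -> ~~ (E \subset 'C(N))%g -> (p %| n)%N.
Proof.
move=> AutGa fpf hid hC nNG abelN ntN aN sEG aE copE cE nsE.
have [p_pr _ _] := pgroup_pdiv (abelem_pgroup abelN) ntN.
have nNG' : G \subset 'N(N)%g := normal_norm nNG.
have sNG : N \subset G := normal_sub nNG.
pose rG := abelem_repr abelN ntN nNG'.
have aMG : {in G &, {morph alpha : x y / (x * y)%g}} := morphicP (Aut_morphic AutGa).
have aG : forall x, x \in G -> alpha x \in G := Aut_closed AutGa.
have aMN : {in N &, {morph alpha : x y / (x * y)%g}}.
  by move=> x y Nx Ny; apply: aMG; apply: (subsetP sNG).
pose Ap := alpha_mx abelN ntN alpha.
have amxE := alpha_mxE abelN ntN aN aMN.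
have rA x : x \in G -> rG x *m Ap = Ap *m rG (alpha x).
  move=> Gx; apply/row_matrixP => i; rewrite !rowE !mulmxA.
  set v := delta_mx 0 i.
  have -> : v = abelem_rV abelN ntN (rVabelem abelN ntN v) by rewrite rVabelemK.
  set y := rVabelem abelN ntN v; have Ny : y \in N by apply: mem_rVabelem.
  rewrite -abelem_rV_J // amxE ?memJ_norm ?(subsetP nNG') // amxE //.
  rewrite -abelem_rV_J ?aN ?aG //; congr (abelem_rV _ _ _).
  by have := morphJ (autm_morphism AutGa) (subsetP sNG y Ny) Gx.
have hrp : evp Ap r = 0.
  apply: (ident_mx abelN ntN aN aMN); case: hid => rs [h1 h2]; exists rs; split=> // x Nx.
  by apply: h2; apply: (subsetP sNG).
have [K [FtoK _]] := countable_algebraic_closure [the countFieldType of 'F_p].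
have pK : p \in [pchar K] := rmorph_pchar FtoK (pchar_Fp p_pr).
pose AK := map_mx FtoK Ap.
pose rK x := map_mx FtoK (rG x).
have amxX := alpha_mxX abelN ntN aN aMN.
have o0 : (0 < #[alpha]%g)%N := order_gt0 _.
have iter_o x : iter #[alpha]%g alpha x = x by rewrite -permX expg_order perm1.
have Apo : Ap ^+ #[alpha]%g = 1.
  apply/row_matrixP => i; rewrite row1 rowE.
  set v := delta_mx 0 i.
  have -> : v = abelem_rV abelN ntN (rVabelem abelN ntN v) by rewrite rVabelemK.
  by rewrite amxX ?mem_rVabelem // iter_o.
have Apu : Ap \in unitmx.
  have := Apo; rewrite -(prednK o0) exprS -mulmxE => /mulmx1_unit[] //.
have rKM : {in E &, forall x y, rK (x * y)%g = rK x *m rK y}.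
  by move=> x y Ex Ey; rewrite /rK -map_mxM repr_mxM ?(subsetP sEG).
have rK1 : rK 1%g = 1%:M by rewrite /rK repr_mx1 map_mx1.
have rKC : {in E &, forall x y, rK x *m rK y = rK y *m rK x}.
  move=> x y Ex Ey; rewrite /rK -!map_mxM; congr (map_mx _ _).
  have Gx := subsetP sEG x Ex; have Gy := subsetP sEG y Ey.
  have kxy : [~ x, y]%g \in rker rG by rewrite rker_abelem inE groupR ?cE.
  rewrite -!repr_mxM // commgC.
  rewrite (repr_mxM rG (groupM Gy Gx) (groupR Gx Gy)) (repr_mxM rG Gy Gx).
  by move/rkerP: kxy => [_ ->]; rewrite mulmx1.
have rKA : {in E, forall x, rK x *m AK = AK *m rK (alpha x)}.
  by move=> x Ex; rewrite /rK /AK -!map_mxM rA ?(subsetP sEG).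
have hNK : (#|E|%:R : K) != 0.
  by rewrite -(dvdn_pcharf pK) -prime_coprime.
have AKu : AK \in unitmx by rewrite map_unitmx.
have [z Ez nz] := subsetPn nsE.
have rKz : rK z != 1%:M.
  apply: contra nz; rewrite /rK -(map_mx1 FtoK) => /eqP /map_mx_inj hz.
  have : z \in rker rG by apply/rkerP; split=> //; apply: (subsetP sEG).
  by rewrite rker_abelem => /setIP[].
have hrK : evp AK r = 0.
  rewrite (evp_wide _ (leqnn (size r))).
  have := congr1 (map_mx FtoK) hrp; rewrite (evp_wide _ (leqnn (size r))).
  rewrite map_mx0 raddf_sum /= => h; rewrite -[RHS]h; apply: eq_bigr => k _.
  by rewrite map_mxZ rmorph_int rmorphXn.
have aME : {in E &, {morph alpha : x y / (x * y)%g}}.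
  by move=> x y Ex Ey; apply: aMG; apply: (subsetP sEG).
have ainj : {in E &, injective alpha} by move=> x y _ _; apply: perm_inj.
have afpf : {in E, forall x, alpha x = x -> x = 1%g}.
  by move=> x Ex; apply: fpf; apply: (subsetP sEG).
have aper : exists2 o, (0 < o)%N & {in E, forall x, iter o alpha x = x}.
  by exists #[alpha]%g.
have [w [wn0 [u [hu hw]]]] :=
  core_main aE aME ainj afpf aper rKM rK1 rKC rKA hNK AKu hrK Ez rKz.
have := rpart_ideal_char hC wn0 hu hw.
by move/eqP; rewrite -(dvdn_pcharf pK).
Qed.


End MPC.
Import MPC.
Module MPD.
Set Implicit Arguments. Unset Strict Implicit. Unset Printing Implicit Defensive.
Local Open Scope group_scope.

Lemma fpf_onto (gT : finGroupType) (G H : {group gT}) (alpha : {perm gT}) :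
  alpha \in Aut G -> (forall x, x \in G -> alpha x = x -> x = 1) ->
  H \subset G -> {in H, forall x, alpha x \in H} ->
  (fun y => y * (alpha y)^-1) @: H = H /\ (fun y => y^-1 * alpha y) @: H = H.
Proof.
move=> AutGa fpf sHG aH.
have aMG : {in G &, {morph alpha : x y / x * y}} := morphicP (Aut_morphic AutGa).
have aV x : x \in G -> alpha x^-1 = (alpha x)^-1.
  by move=> Gx; rewrite -(autmE AutGa) morphV.
split; apply/eqP; rewrite eqEcard card_in_imset ?leqnn ?andbT.
- by apply/subsetP => _ /imsetP[x Hx ->]; rewrite groupM ?groupV ?aH.
- move=> x y Hx Hy /= h.
  have Gx := subsetP sHG x Hx; have Gy := subsetP sHG y Hy.
  have : alpha (y^-1 * x) = y^-1 * x.
    have h2 : y^-1 * x = (alpha y)^-1 * alpha x.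
      by rewrite -{1}[x](mulgKV (alpha x)) h -!mulgA mulKg.
    by rewrite aMG ?groupV // aV // h2.
  move=> hh; have := fpf _ (groupM (groupVr Gy) Gx) hh; move/eqP.
  by rewrite -eq_invg_mul invgK => /eqP ->.
- by apply/subsetP => _ /imsetP[x Hx ->]; rewrite groupM ?groupV ?aH.
move=> x y Hx Hy /= h.
have Gx := subsetP sHG x Hx; have Gy := subsetP sHG y Hy.
have : alpha (y * x^-1) = y * x^-1.
  have h2 : alpha y = (y * x^-1 * alpha x) by rewrite -mulgA h mulKVg.
  by rewrite aMG ?groupV // aV // h2 mulgK.
move=> hh; have := fpf _ (groupM Gy (groupVr Gx)) hh; move/eqP.
by rewrite -eq_mulgV1 => /eqP ->.
Qed.

Lemma inv_Hall pi (gT : finGroupType) (G : {group gT}) (alpha : {perm gT}) :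
  solvable G -> alpha \in Aut G -> (forall x, x \in G -> alpha x = x -> x = 1) ->
  exists2 H : {group gT}, pi.-Hall(G) H & {in H, forall x, alpha x \in H}.
Proof.
move=> solG AutGa fpf.
have [H0 hH0] := Hall_exists pi solG.
pose f := autm_morphism AutGa.
have sH0G := pHall_sub hH0.
have hf : pi.-Hall(G) (f @* H0).
  by rewrite -{1}(im_autm AutGa); apply: morphim_pHall.
have [g Gg defg] := Hall_trans solG hf hH0.
have [onto _] := fpf_onto AutGa fpf (subxx G) (Aut_closed AutGa).
move: Gg; rewrite -{1}onto => /imsetP[y Gy gy].
exists (H0 :^ y)%G; first by rewrite pHallJ.
move=> x Hx.
have e : f @* (H0 :^ y) = H0 :^ y.
  rewrite morphimJ // defg -conjsgM; congr (_ :^ _).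
  by rewrite gy /= autmE mulgKV.
have Gx : x \in G.
  by move: Hx => /=; rewrite -(conjGid Gy); apply/subsetP; rewrite conjSg.
have : alpha x \in f @* (H0 :^ y) by rewrite -[alpha x]/(f x); apply: mem_morphim.
by rewrite e.
Qed.

Lemma CL1 (gT : finGroupType) (G N : {group gT}) (alpha : {perm gT})
    (r : {poly int}) (n p : nat) :
  solvable G -> alpha \in Aut G -> (forall x, x \in G -> alpha x = x -> x = 1) ->
  is_identity G alpha r -> is_Cong r n ->
  N <| G -> p.-abelem N -> N :!=: 1 -> {in N, forall x, alpha x \in N} ->
  ~~ (p %| n) ->
  forall Q : {group gT}, Q \subset G -> {in Q, forall x, alpha x \in Q} ->
    coprime p #|Q| -> Q \subset 'C(N).
Proof.
move=> solG AutGa fpf hid hC nNG abelN ntN aN npn Q.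
have [k] := ubnP #|Q|; elim: k Q => // k IH Q /ltnSE hQk sQG aQ copQ.
apply/negPn/negP => nsQ.
have ntQ : Q :!=: 1 by apply: contra nsQ => /eqP ->; rewrite sub1G.
have prQ : Q^`(1) \proper Q := sol_der1_proper solG sQG ntQ.
have sQ'G : Q^`(1) \subset G := subset_trans (proper_sub prQ) sQG.
pose f := autm_morphism AutGa.
have aQ' : {in Q^`(1), forall x, alpha x \in Q^`(1)}.
  move=> x Qx; rewrite -[alpha x]/(f x).
  have : f x \in f @* Q^`(1) by apply: mem_morphim => //; apply: (subsetP sQ'G).
  apply/subsetP; rewrite morphim_der //; apply: dergS.
  by apply/subsetP => _ /morphimP[y _ Qy ->]; apply: aQ.
have cQ' : Q^`(1) \subset 'C(N).
  apply: IH.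
  - by apply: leq_trans (proper_card prQ) _.
  - exact: sQ'G.
  - exact: aQ'.
  - by apply: coprime_dvdr copQ; apply: cardSg; apply: proper_sub.
have := CL0 AutGa fpf hid hC nNG abelN ntN aN sQG aQ copQ.
have cE : {in Q &, forall x y, [~ x, y] \in 'C(N)}.
  by move=> x y Qx Qy; apply: (subsetP cQ'); apply: mem_commg.
by move=> /(_ cE nsQ); rewrite (negPf npn).
Qed.

Lemma PP (gT : finGroupType) (G N : {group gT}) (alpha : {perm gT})
    (r : {poly int}) (n p : nat) :
  solvable G -> alpha \in Aut G -> (forall x, x \in G -> alpha x = x -> x = 1) ->
  is_identity G alpha r -> is_Cong r n ->
  N <| G -> p.-abelem N -> N :!=: 1 -> {in N, forall x, alpha x \in N} ->
  ~~ (p %| n) ->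
  forall L : {group gT}, L \subset G -> p^'.-group L -> L \subset 'C(N).
Proof.
move=> solG AutGa fpf hid hC nNG abelN ntN aN npn L sLG pL.
have [p_pr _ _] := pgroup_pdiv (abelem_pgroup abelN) ntN.
have [K hK aK] := inv_Hall p^' solG AutGa fpf.
have cK : K \subset 'C(N).
  apply: (CL1 solG AutGa fpf hid hC nNG abelN ntN aN npn) => //.
    exact: pHall_sub hK.
  exact: pnat_coprime (pnat_id p_pr) (pHall_pgroup hK).
have [x Gx sLK] := Hall_subJ solG hK sLG pL.
apply: subset_trans sLK _.
by rewrite -(normP (subsetP (normal_norm nNG) x Gx)) centJ conjSg.
Qed.

End MPD.
Import MPD.
Module MPE.
Set Implicit Arguments. Unset Strict Implicit. Unset Printing Implicit Defensive.
Local Open Scope group_scope.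

Section QuotAut.
Variables (gT : finGroupType) (G N : {group gT}) (alpha : {perm gT}).
Hypotheses (AutGa : alpha \in Aut G) (nNG : N <| G) (aN : {in N, forall x, alpha x \in N}).

Let sNG := normal_sub nNG.
Let nG := normal_norm nNG.
Let aMG : {in G &, {morph alpha : x y / x * y}} := morphicP (Aut_morphic AutGa).
Let aG := Aut_closed AutGa.
Let f := autm_morphism AutGa.

Lemma aNinv z : z \in G -> alpha z \in N -> z \in N.
Proof.
move=> Gz aNz.
have fN : f @* N = N.
  apply/morphim_fixP => //; first exact: injm_autm.
  by apply/subsetP => _ /morphimP[y _ Ny ->]; apply: aN.
have : z \in f @*^-1 (f @* N).
  by rewrite !inE Gz /= fN.
by rewrite morphimGK // ker_autm sub1G.
Qed.

Definition qf (C : coset_of N) : coset_of N := coset N (alpha (repr C)).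

Lemma qfE x : x \in G -> qf (coset N x) = coset N (alpha x).
Proof.
move=> Gx; have Nx := subsetP nG x Gx.
rewrite /qf; have := mem_repr_coset (coset N x); rewrite val_coset // => /rcosetP[k Nk ->].
have Gk := subsetP sNG k Nk.
rewrite aMG // morphM; first by rewrite [X in X * _ = _](coset_id (aN Nk)) mul1g.
- by apply: (subsetP nG); apply: (subsetP sNG); apply: aN.
by apply: (subsetP nG); apply: aG.
Qed.

Lemma qf_sub : qf @: (G / N) \subset G / N.
Proof.
apply/subsetP => _ /imsetP[_ /morphimP[x Nx Gx ->] ->].
by rewrite qfE //; apply: mem_quotient; apply: aG.
Qed.

Lemma qf_inj : {in G / N &, injective qf}.
Proof.
move=> _ _ /morphimP[x Nx Gx ->] /morphimP[y Ny Gy ->]; rewrite !qfE // => h.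
have Nax := subsetP nG _ (aG Gx); have Nay := subsetP nG _ (aG Gy).
have : alpha (x * y^-1) \in N.
  rewrite aMG ?groupV // -(autmE AutGa) morphV // autmE.
  apply: coset_idr; first by rewrite groupM ?groupV.
  by rewrite morphM ?groupV // morphV //; apply/eqP; rewrite -eq_mulgV1; apply/eqP; exact: h.
move/(aNinv (groupM Gx (groupVr Gy))) => hN.
apply/eqP; rewrite eq_mulgV1 -morphV // -morphM ?groupV //.
by apply/eqP; apply: coset_id.
Qed.

Definition qalpha : {perm coset_of N} := perm_in qf_inj qf_sub.

Lemma qalphaE x : x \in G -> qalpha (coset N x) = coset N (alpha x).
Proof.
by move=> Gx; rewrite /qalpha perm_inE ?qfE //; apply: mem_quotient.
Qed.

Lemma Aut_qalpha : qalpha \in Aut (G / N).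
Proof.
rewrite inE perm_in_on /=; apply/morphicP.
move=> _ _ /morphimP[x Nx Gx ->] /morphimP[y Ny Gy ->].
rewrite -morphM // !qalphaE ?groupM // aMG // morphM //.
- by apply: (subsetP nG); apply: aG.
by apply: (subsetP nG); apply: aG.
Qed.

Hypothesis fpf : forall x, x \in G -> alpha x = x -> x = 1.

Lemma fpf_inj2 : {in G &, injective (fun y => y^-1 * alpha y)}.
Proof.
apply/imset_injP; have [_ ->] := fpf_onto AutGa fpf (subxx G) aG.
by [].
Qed.

Lemma fpf_qalpha C : C \in G / N -> qalpha C = C -> C = 1.
Proof.
move=> /morphimP[x Nx Gx ->]; rewrite qalphaE // => h.
have : x^-1 * alpha x \in N.
  apply: coset_idr; first by rewrite groupM ?groupV //; apply: (subsetP nG); apply: aG.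
  rewrite morphM ?groupV //; last by apply: (subsetP nG); apply: aG.
  by rewrite morphV // -h mulVg.
have [_ onN] := fpf_onto AutGa fpf sNG aN.
rewrite -{1}onN => /imsetP[k Nk hk].
have Gk := subsetP sNG k Nk.
have xk : x = k by apply: fpf_inj2.
by rewrite xk; apply: coset_id.
Qed.

Lemma iter_q i x : x \in G -> iter i qalpha (coset N x) = coset N (iter i alpha x).
Proof.
move=> Gx; elim: i => //= i ->.
have Gi : iter i alpha x \in G by elim: (i) => //= j hj; apply: aG.
by rewrite qalphaE.
Qed.

Lemma gexpz_coset x c : x \in 'N(N) -> gexpz (coset N x) c = coset N (gexpz x c).
Proof. by move=> Nx; case: c => k /=; rewrite ?morphV ?groupX // morphX. Qed.

Lemma polyact_in_G s x : x \in G -> polyact alpha s x \in G.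
Proof.
move=> Gx; rewrite /polyact; apply: group_prod => i _.
have : gexpz x (s`_i)%R \in G by case: (s`_i)%R => k /=; rewrite ?groupV groupX.
move: (gexpz x _) => y Gy; elim: (nat_of_ord i) => //= j hj; exact: aG.
Qed.

Lemma polyact_q s x : x \in G -> polyact qalpha s (coset N x) = coset N (polyact alpha s x).
Proof.
move=> Gx; have Nx := subsetP nG x Gx.
have Gi c i : iter i alpha (gexpz x c) \in G.
  elim: i => /= [|i hi]; last by apply: aG.
  by case: c => k /=; rewrite ?groupV groupX.
rewrite /polyact morph_prod; last by move=> i _; apply: (subsetP nG).
apply: eq_bigr => i _; rewrite gexpz_coset // iter_q //.
exact: (Gi _ 0).
Qed.

Lemma ident_q r : is_identity G alpha r -> is_identity (G / N) qalpha r.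
Proof.
case=> rs [h1 h2]; exists rs; split=> // _ /morphimP[x Nx Gx ->].
under eq_bigr do rewrite polyact_q //.
rewrite -morph_prod ?h2 ?morph1 // => s _.
by apply: (subsetP nG); apply: polyact_in_G.
Qed.

End QuotAut.

End MPE.
Import MPE.
Module MPF.
Set Implicit Arguments. Unset Strict Implicit. Unset Printing Implicit Defensive.
Local Open Scope group_scope.

Lemma charinv_alpha (gT : finGroupType) (G N X : {group gT}) (alpha : {perm gT}) :
  alpha \in Aut G -> N \subset G -> {in N, forall x, alpha x \in N} ->
  X \char N -> {in X, forall x, alpha x \in X}.
Proof.
move=> AutGa sNG aN /charP[sXN chX] x Xx.
pose g := restrm sNG (autm_morphism AutGa).
have injg : 'injm g by apply: injm_restrm; apply: injm_autm.
have gN : g @* N = N.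
  rewrite morphim_restrm setIid; apply/morphim_fixP => //; first exact: injm_autm.
  by apply/subsetP => _ /morphimP[y _ Ny ->]; apply: aN.
have := chX g injg gN.
have Nx := subsetP sXN x Xx.
move=> <-; rewrite -[alpha x]/(g x); exact: mem_morphim.
Qed.

Lemma min_abelem (gT : finGroupType) (G N : {group gT}) (alpha : {perm gT}) :
  solvable G -> alpha \in Aut G ->
  mingroup N (fun H : {group gT} => [&& H :!=: 1, H <| G & [forall x in H, alpha x \in H]]) ->
  exists2 p, prime p & p.-abelem N.
Proof.
move=> solG AutGa /mingroupP[/and3P[ntN nNG /forall_inP aN] minN].
have sNG := normal_sub nNG.
have aNi : {in N, forall x, alpha x \in N} by move=> x Nx; apply: aN.
have PX (X : {group gT}) : X \char N -> X :!=: 1 -> X :=: N.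
  move=> chX ntX; apply: minN; last exact: char_sub.
  rewrite ntX (char_normal_trans chX nNG) /=; apply/forall_inP => x Xx.
  exact: (charinv_alpha AutGa sNG aNi chX).
have cNN : abelian N.
  apply/derG1P; apply/eqP; apply/negPn/negP => ntN'.
  have prN := sol_der1_proper solG sNG ntN.
  by move: prN; rewrite (PX _ (der_char 1 N) ntN') properxx.
pose p := pdiv #|N|.
have p_pr : prime p by apply: pdiv_prime; rewrite cardG_gt1.
have [x Nx ox] := Cauchy p_pr (pdiv_dvd #|N|).
have ntO : 'O_p(N) :!=: 1.
  have : <[x]> \subset 'O_p(N).
    apply: pcore_max; last by rewrite -sub_abelian_normal ?cycle_subG.
    by rewrite /pgroup -orderE ox pnat_id.
  apply: contraL => /eqP ->; rewrite subG1 cycle_eq1; apply/eqP => x1.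
  by move: ox; rewrite x1 order1 => p1; rewrite -p1 in p_pr.
have chX : 'Ohm_1('O_p(N)) \char N := char_trans (Ohm_char 1 _) (pcore_char p N).
have ntX : 'Ohm_1('O_p(N)) :!=: 1 by rewrite Ohm1_eq1.
have eX := PX _ chX ntX.
exists p => //; rewrite -eX; apply: Ohm1_abelem; first exact: pcore_pgroup.
exact: abelianS (pcore_sub p N) cNN.
Qed.

Lemma Opi_quot (gT : finGroupType) (G N : {group gT}) (p : nat) (pi : nat_pred) :
  solvable G -> N <| G -> p.-group N -> p \notin pi -> 'O_pi(G) = 1 ->
  (forall L : {group gT}, L \subset G -> p^'.-group L -> L \subset 'C(N)) ->
  'O_pi(G / N) = 1.
Proof.
move=> solG nNG pN npi O1 hcent.
have [X defX sNX nXG] := inv_quotientN nNG (pcore_normal pi (G / N)).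
have sXG := normal_sub nXG.
have nNX : X \subset 'N(N) := subset_trans sXG (normal_norm nNG).
have piXN : pi.-nat #|X : N|.
  by have := pcore_pgroup pi (G / N); rewrite defX /pgroup card_quotient.
have solX := solvableS sXG solG.
have [H hH] := Hall_exists pi solX.
have sHX := pHall_sub hH.
have p'H : p^'.-group H.
  apply: sub_pgroup (pHall_pgroup hH) => q piq; rewrite !inE.
  by apply: contraNneq npi => <-.
have cHN : H \subset 'C(N) := hcent H (subset_trans sHX sXG) p'H.
have pi'N : pi^'.-group N by apply: pi_pnat pN _; rewrite inE.
have cardH : #|H| = #|X : N|.
  rewrite (card_Hall hH) -(Lagrange sNX) partnM ?cardG_gt0 ?indexg_gt0 //.
  by rewrite part_p'nat ?mul1n ?part_pnat_id.
have eX : N * H = X.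
  apply/eqP; rewrite eqEcard mulG_subG sNX sHX /=.
  rewrite TI_cardMg; last by apply: coprime_TIg; exact: pnat_coprime pN p'H.
  by rewrite cardH Lagrange.
have nHX : H <| X.
  rewrite /normal sHX -eX mulG_subG normG andbT.
  by apply: subset_trans (cent_sub H); rewrite centsC.
have sHO : H \subset 'O_pi(G).
  apply: subset_trans (pcore_max (pHall_pgroup hH) nHX) _.
  apply: pcore_max; first exact: pcore_pgroup.
  exact: char_normal_trans (pcore_char pi X) nXG.
have H1 : #|H| = 1%N by apply/eqP; rewrite -trivg_card1 -subG1 -O1.
by apply/eqP; rewrite defX trivg_card1 card_quotient // -cardH H1.
Qed.

Lemma Main (n : nat) (r : {poly int}) : (0 < n)%N -> is_Cong r n ->
  forall k (gT : finGroupType) (G : {group gT}) (alpha : {perm gT}),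
  (#|G| <= k)%N -> solvable G -> alpha \in Aut G ->
  (forall x, x \in G -> alpha x = x -> x = 1) ->
  is_identity G alpha r -> 'O_(\pi(n))(G) = 1 ->
  nilpotent G /\ \pi(n)^'.-group G.
Proof.
move=> n0 hC; elim=> [|k IH] gT G alpha hGk solG AutGa fpf hid hO.
  by move: (cardG_gt0 G); rewrite leqNgt (leq_ltn_trans hGk) ?ltnn.
have [G1 | ntG] := eqsVneq G 1.
  by rewrite G1 nilpotent1 pgroup1.
pose P := fun H : {group gT} => [&& H :!=: 1, H <| G & [forall x in H, alpha x \in H]].
have PG : P G.
  rewrite /P ntG normal_refl /=; apply/forall_inP => x Gx; exact: Aut_closed.
have [N minN sNG] := mingroup_exists PG.
have [p p_pr abelN] := min_abelem solG AutGa minN.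
move/mingroupP: (minN) => [/and3P[ntN nNG /forall_inP aN0] minN'].
have aN : {in N, forall x, alpha x \in N} by move=> x Nx; apply: aN0.
have pN : p.-group N := abelem_pgroup abelN.
have npn : ~~ (p %| n)%N.
  apply/negP => pn.
  have pin : p \in \pi(n) by rewrite mem_primes p_pr n0 pn.
  have : N \subset 'O_(\pi(n))(G) by apply: pcore_max => //; apply: pi_pnat pN pin.
  by rewrite hO subG1 (negPf ntN).
have hcent := PP solG AutGa fpf hid hC nNG abelN ntN aN npn.
have npi : p \notin \pi(n) by rewrite mem_primes negb_and !negb_and npn !orbT.
have Oq := Opi_quot solG nNG pN npi hO hcent.
have [nilq pi'q] : nilpotent (G / N) /\ \pi(n)^'.-group (G / N).
  apply: (IH _ _ (qalpha AutGa nNG aN)).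
  - by rewrite -ltnS (leq_trans (ltn_quotient ntN sNG)).
  - exact: quotient_sol.
  - exact: Aut_qalpha.
  - exact: fpf_qalpha.
  - exact: ident_q.
  - exact: Oq.
split; last first.
  rewrite -(pquotient_pgroup _ (normal_norm nNG)) //.
  by apply: pi_pnat pN _; rewrite inE.
have [S sylS] := Sylow_exists p G.
have sSG := pHall_sub sylS.
have sNS : N \subset S.
  apply: subset_trans (pcore_sub_Hall sylS); exact: pcore_max.
have nNS : N <| S := normalS sNS sSG nNG.
have ntZ0 : N :&: 'Z(S) != 1.
  exact: meet_center_nil (pgroup_nil (pHall_pgroup sylS)) nNS ntN.
have [K hK] := Hall_exists p^' solG.
have sKG := pHall_sub hK.
have cKN : K \subset 'C(N) := hcent K sKG (pHall_pgroup hK).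
have sZ0 : N :&: 'Z(S) \subset 'Z(G).
  apply/subsetP => y /setIP[Ny Zy].
  have Gy := subsetP sNG y Ny.
  have sSC : S \subset 'C_G[y].
    by rewrite subsetI sSG sub_cent1; case/setIP: Zy.
  have sKC : K \subset 'C_G[y].
    rewrite subsetI sKG; apply: subset_trans cKN _.
    by rewrite sub_cent1; apply/centP => z Cz; apply/esym/(centP Cz).
  have eC : 'C_G[y] = G.
    apply/eqP; rewrite eqEcard subsetIl /=; apply: dvdn_leq; first exact: cardG_gt0.
    rewrite -(partnC p (cardG_gt0 G)) -(card_Hall sylS) -(card_Hall hK).
    rewrite Gauss_dvd ?cardSg //.
    exact: pnat_coprime (pHall_pgroup sylS) (pHall_pgroup hK).
  rewrite inE Gy /= -sub_cent1; apply: subset_trans (subsetIr G _).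
  by rewrite eC.
have eNZ : N :&: 'Z(G) :=: N.
  apply: minN'; last exact: subsetIl.
  rewrite /P (normalI nNG (center_normal G)) /=.
  apply/andP; split.
    by apply: (contraNneq _ ntZ0) => h; rewrite -subG1 -h subsetI subsetIl sZ0.
  apply/forall_inP => x /setIP[Nx Zx]; rewrite inE aN //=.
  exact: (charinv_alpha AutGa (subxx G) (Aut_closed AutGa) (center_char G)).
have sNZ : N \subset 'Z(G) by rewrite -eNZ subsetIr.
rewrite -quotient_center_nil.
have nZG := center_normal G.
rewrite -(isog_nil (third_isog sNZ nNG nZG)).
exact: quotient_nil.
Qed.


End MPF.
Import MPF.
Module MFin.
Set Implicit Arguments. Unset Strict Implicit. Unset Printing Implicit Defensive.
Local Open Scope group_scope.

Lemma dvd_pow n m : (0 < n)%N -> \pi(n).-nat m -> (m %| n ^ m)%N.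
Proof.
move=> n0 pim; have m0 : (0 < m)%N by case/andP: pim.
apply/dvdn_partP => // q qm.
have qn : q \in \pi(n) := pnatPpi pim qm.
have q_pr : prime q by move: qn; rewrite mem_primes => /andP[].
rewrite p_part pfactor_dvdn ?expn_gt0 ?n0 // lognX.
apply: leq_trans (ltnW (ltn_logl q m0)) _.
by rewrite leq_pmulr // logn_gt0.
Qed.


End MFin.
Import MFin.
Unset Implicit Arguments.
Close Scope ring_scope.
Local Open Scope group_scope.
Theorem theorem6p2 (gT : finGroupType) (G : {group gT}) (alpha : {perm gT})
    (r : {poly int}) (n : nat) :
  solvable G ->
  alpha \in Aut G ->
  (forall x, x \in G -> alpha x = x -> x = 1) ->
  is_identity G alpha r ->
  is_Cong r n ->
  exists S : {group gT},
    [/\ S \char G, is_ngroup S n, nilpotent (G / S) & is_nprimegroup (G / S) n].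
Proof.
move=> solG AutGa fpf hid hC.
case: (posnP n) => [n0 | n0].
  exists G; split.
  - exact: char_refl.
  - by move=> h _; exists 1%N; rewrite n0 dvdn0.
  - by rewrite trivg_quotient nilpotent1.
  - by move=> h; rewrite trivg_quotient => /set1P.
pose S := 'O_(\pi(n))(G).
have nSG : S <| G := pcore_normal _ G.
have aS : {in S, forall x, alpha x \in S}.
  move=> x Sx; exact: (charinv_alpha AutGa (subxx G) (Aut_closed AutGa) (pcore_char _ G)).
have [nilq pi'q] := Main n0 hC (leqnn _) (quotient_sol _ solG)
  (Aut_qalpha AutGa nSG aS) (@fpf_qalpha _ _ _ _ AutGa nSG aS fpf) (ident_q AutGa nSG aS hid)
  (trivg_pcore_quotient _ G).
exists [group of S]; split => //.
- exact: pcore_char.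
- move=> h Sh; exists #[h]; apply: dvd_pow => //.
  exact: mem_p_elt (pcore_pgroup _ G) Sh.
move=> h Gh hn.
have ohn : (#[h] %| n)%N by rewrite order_dvdn hn.
have : #[h] = 1%N.
  apply: (@pnat_1 (\pi(n))).
    exact: pnat_dvd ohn (pnat_pi n0).
  exact: mem_p_elt pi'q Gh.
by move/eqP; rewrite order_eq1 => /eqP.
Qed.
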